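(* The theory TRC$^*$ is inconsistent.
   Context: TRC$^*$ is a first-order theory with equality. Its language has a binary function ''application'', written by juxtaposition ($xy$ denotes $x$ applied to $y$), with the convention that juxtaposition associates to the left ($xyz=(xy)z$). It also has constants $K$, $\mathrm{Abst}$, $\mathrm{Eq}$, $p_1$, $p_2$ and a binary function $\langle x,y\rangle$ (pairing); here $K$ is a constant, i.e. an object of the domain. The axioms of TRC$^*$ are: (I$^*$) $K\,x\,y=x$; (II) $p_1\langle x_1,x_2\rangle=x_1$ and $p_2\langle x_1,x_2\rangle=x_2$; (III) $\langle p_1x,p_2x\rangle=x$; (IV) $\langle f,g\rangle x=\langle fx,gx\rangle$; (V$^*$) $\mathrm{Abst}\,x\,y\,z=x\,(K z)\,(y\,z)$; (VI) $\mathrm{Eq}\langle x,y\rangle=p_1$ if $x=y$, and $\mathrm{Eq}\langle x,y\rangle=p_2$ if $x\neq y$; (VII) extensionality: if $fx=gx$ for all $x$, then $f=g$; (VIII) $p_1\neq p_2$. *)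

(* Defs.v *)
(* The axioms (I-star)-(VIII) of TRC-star, with app f x standing for "f x". *)
Definition TRCstar_model (D : Type) (app : D -> D -> D)
  (K Abst Eq p1 p2 : D) (pair : D -> D -> D) : Prop :=
  (forall x y, app (app K x) y = x) /\
  (forall x1 x2, app p1 (pair x1 x2) = x1) /\
               (forall x1 x2, app p2 (pair x1 x2) = x2) /\
  (forall x, pair (app p1 x) (app p2 x) = x) /\
  (forall f g x, app (pair f g) x = pair (app f x) (app g x)) /\
  (forall x y z,
                  app (app (app Abst x) y) z = app (app x (app K z)) (app y z)) /\
  (forall x y, x = y -> app Eq (pair x y) = p1) /\
               (forall x y, x <> y -> app Eq (pair x y) = p2) /\
  (forall f g, (forall x, app f x = app g x) -> f = g) /\
  p1 <> p2.

(* Main.v *)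
Require Import Defs.
From Stdlib Require Import Classical.

Theorem mainTheorem7 :
  forall (D : Type) (app : D -> D -> D) (K Abst Eq p1 p2 : D)
         (pair : D -> D -> D),
    ~ TRCstar_model D app K Abst Eq p1 p2 pair.
Proof.
  intros D app K A Eq p1 p2 pair
    (hK & hp1 & hp2 & hIII & hIV & hA & hE1 & hE2 & hExt & hne).
  set (I := pair p1 p2).
  assert (hI : forall x, app I x = x) by (intro x; unfold I; rewrite hIV; apply hIII).
  set (Bc := app (app A (app K A)) K).
  assert (hB : forall a g u, app (app (app Bc a) g) u = app a (app g u)).
  { intros a g u. unfold Bc. rewrite hA, hK, hA, hK. reflexivity. }
  set (W := app (app A A) K).
  assert (hW : forall z w, app (app W z) w = app z z).
  { intros z w. unfold W. rewrite hA, hA, !hK. reflexivity. }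
  set (q := app K p2).
  set (f := app (app Bc Eq) (pair I (app K q))).
  assert (hf : forall x, app f x = app Eq (pair x q)).
  { intro x. unfold f. rewrite hB, hIV, hI, hK. reflexivity. }
  set (P := app (app Bc (app Bc f)) W).
  assert (hP : forall z w, app (app P z) w = app f (app z z)).
  { intros z w. unfold P. rewrite hB, hB, hW. reflexivity. }
  set (t := app P P).
  assert (ht : forall w, app t w = app Eq (pair t q)).
  { intro w. unfold t. rewrite hP, hf. reflexivity. }
  destruct (Classical_Prop.classic (t = q)) as [e|e].
  - assert (hk : t = app K p1).
    { apply hExt. intro w. rewrite ht, hK, (hE1 _ _ e). reflexivity. }
    apply hne. rewrite <- (hK p1 p1), <- hk, e. unfold q. apply hK.
  - apply e. apply hExt. intro w. rewrite ht, (hE2 _ _ e). unfold q. rewrite hK. reflexivity.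
Qed.
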